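(* There is an absolute constant $c_0 > 0$ such that the following holds. Let $\mathcal{U}$ be a finite set, $\mathbf{a} \in \mathbb{Z}_{\geq 0}^{\mathcal{U}}$ with $F_1 = \sum_{i \in \mathcal{U}} \mathbf{a}_i$, let $k > 0$, $\delta \in (0,1)$, and let $A \subseteq \mathcal{U}$ be such that $\mathbf{a}_i \leq F_1\delta/(2k^2)$ for all $i \in A$. Let $h \geq c_0 k$ be an integer and $f : \mathcal{U} \to [h]$ a pairwise-independent hash function. Then with probability at least $1-\delta$, \[ \forall j \in [h]:\quad \sum_{i \in A \cap f^{-1}(j)} \mathbf{a}_i \leq F_1/k . \]
   Context: $f$ is a pairwise-independent hash function if for each $i$, $f(i)$ is uniformly distributed on $[h] = \{1,\dots,h\}$ and for any distinct $i,i'$ the values $f(i), f(i')$ are independent. *)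

(* Defs.v *)
From mathcomp Require Import all_boot all_order all_algebra.
Set Implicit Arguments. Unset Strict Implicit. Unset Printing Implicit Defensive.
Import Order.TTheory GRing.Theory Num.Theory.
Local Open Scope ring_scope.

Definition is_distr (R : numDomainType) (T : finType) (p : T -> R) :=
  (forall w, 0 <= p w) /\ \sum_(w : T) p w = 1.

Definition prob (R : numDomainType) (T : finType) (p : T -> R) (E : pred T) : R :=
  \sum_(w : T | E w) p w.

(* A random hash function f : U -> [h] (here [h] is represented by 'I_h)
   is given by its law p, a distribution on the finite set of all functions
   U -> 'I_h. *)
Definition pairwise_indep_hash (R : numFieldType) (U : finType) (h : nat)
  (p : {ffun U -> 'I_h} -> R) :=
  [/\ is_distr p,
      (forall (i : U) (j : 'I_h), prob p (fun f => f i == j) = 1 / h%:R) &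
      (forall (i i' : U) (j j' : 'I_h), i != i' ->
         prob p (fun f => (f i == j) && (f i' == j')) =
         prob p (fun f => f i == j) * prob p (fun f => f i' == j'))].

(* Main.v *)
Require Import Defs.
From mathcomp Require Import all_boot all_order all_algebra.
From mathcomp Require Import ring lra.
Import Order.TTheory GRing.Theory Num.Theory.
Local Open Scope ring_scope.

Lemma sub_le (R : numDomainType) (I : finType) (P Q : pred I) (b : I -> R) :
  (forall i, 0 <= b i) -> (forall i, P i -> Q i) ->
  \sum_(i | P i) b i <= \sum_(i | Q i) b i.
Proof.
move=> b0 PQ; rewrite [X in _ <= X](bigID P) /=.
rewrite (eq_bigl P); last first.
  by move=> i; case Pi: (P i); rewrite ?andbT ?andbF //; exact: PQ.
by rewrite lerDl sumr_ge0.
Qed.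

Lemma sum_X (R : realFieldType) (U : finType) h (f : {ffun U -> 'I_h})
  (A : {set U}) (b : U -> R) :
  \sum_(j < h) \sum_(i in A | f i == j) b i = \sum_(i in A) b i.
Proof. by rewrite [RHS](partition_big (fun i => f i) xpredT). Qed.

Lemma sum_X2 (R : realFieldType) (U : finType) h (f : {ffun U -> 'I_h})
  (A : {set U}) (b : U -> R) :
  \sum_(j < h) (\sum_(i in A | f i == j) b i) ^+ 2 =
  \sum_(i in A) \sum_(i' in A) b i * b i' * (f i' == f i)%:R.
Proof.
rewrite [RHS](partition_big (fun i => f i) xpredT) //; apply: eq_bigr => j _.
rewrite expr2 mulr_suml; apply: eq_bigr => i /andP[_ /eqP ->].
rewrite mulr_sumr big_mkcondr /=; apply: eq_bigr => i' _.
by case: (f i' == j); rewrite ?mulr1 ?mulr0.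
Qed.

Lemma probE (R : realFieldType) (T : finType) (p : T -> R) (E : pred T) :
  prob p E = \sum_w p w * (E w)%:R.
Proof.
rewrite /prob big_mkcond; apply: eq_bigr => w _.
by case: (E w); rewrite ?mulr1 ?mulr0.
Qed.

Lemma EZ (R : realFieldType) (U : finType) h (p : {ffun U -> 'I_h} -> R)
  (A : {set U}) (b : U -> R) :
  \sum_f p f * (\sum_(i in A) \sum_(i' in A) b i * b i' * (f i' == f i)%:R)
  = \sum_(i in A) \sum_(i' in A) b i * b i' * prob p (fun f => f i' == f i).
Proof.
under eq_bigr do rewrite mulr_sumr.
rewrite exchange_big; apply: eq_bigr => i _.
under eq_bigr do rewrite mulr_sumr.
rewrite exchange_big; apply: eq_bigr => i' _.
rewrite probE mulr_sumr; apply: eq_bigr => f _; ring.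
Qed.

Lemma prob_same (R : realFieldType) (U : finType) h (p : {ffun U -> 'I_h} -> R) i :
  is_distr p -> prob p (fun f => f i == f i) = 1.
Proof. by case=> _ s1; rewrite /prob -s1; apply: eq_bigl => f; rewrite eqxx. Qed.

Lemma prob_diff (R : realFieldType) (U : finType) h (p : {ffun U -> 'I_h} -> R) i i' :
  (0 < h)%N -> pairwise_indep_hash p -> i != i' ->
  prob p (fun f => f i' == f i) = 1 / h%:R.
Proof.
move=> h0 [_ H2 H3] ii.
rewrite /prob (partition_big (fun f : {ffun U -> 'I_h} => f i) xpredT) //=.
transitivity (\sum_(j < h) (1/h%:R : R) * (1/h%:R)).
  apply: eq_bigr => j _; rewrite -{1}(H2 i j) -(H2 i' j) -(H3 i i' j j ii) /prob.
  apply: eq_bigl => f; case: (f i =P j) => [->|] /=; first by rewrite andbT.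
  by rewrite andbF.
rewrite sumr_const card_ord -mulr_natl.
have : h%:R != 0 :> R by rewrite pnatr_eq0 -lt0n.
move=> hn; by field.
Qed.

Lemma EZ_le (R : realFieldType) (U : finType) h (p : {ffun U -> 'I_h} -> R)
  (A : {set U}) (b : U -> R) :
  (0 < h)%N -> pairwise_indep_hash p -> (forall i, 0 <= b i) ->
  \sum_(i in A) \sum_(i' in A) b i * b i' * prob p (fun f => f i' == f i)
  <= \sum_(i in A) b i ^+ 2 + (\sum_(i in A) b i) ^+ 2 / h%:R.
Proof.
move=> h0 ph b0.
have hpos : 0 < h%:R :> R by rewrite ltr0n.
have -> : (\sum_(i in A) b i) ^+ 2 / h%:R =
          \sum_(i in A) \sum_(i' in A) b i * b i' / h%:R.
  rewrite expr2 big_distrlr /= mulr_suml; apply: eq_bigr => i _.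
  by rewrite mulr_suml.
rewrite -big_split /=; apply: ler_sum => i iA.
rewrite (bigD1 i iA) [X in _ <= _ + X](bigD1 i iA) /=.
rewrite prob_same; last by case: ph.
rewrite (eq_bigr (fun i' => b i * b i' / h%:R)); last first.
  move=> i' /andP[_ ne]; rewrite prob_diff //; first by rewrite div1r.
  by rewrite eq_sym.
rewrite mulr1 expr2 addrA lerD2r lerDl.
by rewrite divr_ge0 ?mulr_ge0 // ltW.
Qed.

Lemma Y_eq (R : realFieldType) (U : finType) h (f : {ffun U -> 'I_h})
  (A : {set U}) (b : U -> R) :
  (0 < h)%N ->
  \sum_(j < h) (\sum_(i in A | f i == j) b i - (\sum_(i in A) b i) / h%:R) ^+ 2 =
  \sum_(i in A) \sum_(i' in A) b i * b i' * (f i' == f i)%:R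
   - (\sum_(i in A) b i) ^+ 2 / h%:R.
Proof.
move=> h0.
have hn : h%:R != 0 :> R by rewrite pnatr_eq0 -lt0n.
set S := \sum_(i in A) b i.
transitivity (\sum_(j < h) ((\sum_(i in A | f i == j) b i) ^+ 2
   - (2 * (S / h%:R)) * \sum_(i in A | f i == j) b i + (S / h%:R) ^+ 2)).
  by apply: eq_bigr => j _; ring.
rewrite big_split sumrB /= -mulr_sumr sum_X sum_X2 sumr_const card_ord.
rewrite -mulr_natl -/S.
by field.
Qed.

Theorem lemma7 :
  exists c0 : rat, 0 < c0 /\
  forall (R : realFieldType) (U : finType) (a : U -> nat) (k delta : R)
         (A : {set U}) (h : nat) (p : {ffun U -> 'I_h} -> R),
    0 < k -> 0 < delta < 1 ->
    (forall i, i \in A ->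
       (a i)%:R <= (\sum_(i0 : U) (a i0)%:R) * delta / (2 * k ^+ 2)) ->
    ratr c0 * k <= h%:R ->
    pairwise_indep_hash p ->
    1 - delta <=
      prob p (fun f => [forall j : 'I_h,
        (\sum_(i in A | f i == j) (a i)%:R) <= (\sum_(i0 : U) (a i0)%:R) / k]).
Proof.
exists 4%:R; split; first by [].
move=> R U a k delta A h p k0 /andP[d0 d1] Ha hk ph.
rewrite ratr_nat in hk.
set b := fun i => (a i)%:R : R.
have b0 : forall i, 0 <= b i by move=> i; rewrite /b ler0n.
set F := \sum_(i0 : U) (a i0)%:R : R.
set S := \sum_(i in A) b i.
have hpos : 0 < h%:R :> R by apply: lt_le_trans hk; rewrite mulr_gt0.
have h0 : (0 < h)%N by rewrite -(ltr0n R).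
have [pge0 psum1] : is_distr p by case: ph.
set good := fun f : {ffun U -> 'I_h} =>
  [forall j : 'I_h, (\sum_(i in A | f i == j) (a i)%:R) <= F / k].
have split1 : prob p good + prob p (fun f => ~~ good f) = 1.
  by rewrite -psum1 [RHS](bigID good).
have XleF : forall (f : {ffun U -> 'I_h}) j, \sum_(i in A | f i == j) b i <= F.
  by move=> f j; apply: sub_le.
have F0 : 0 <= F by apply: sumr_ge0.
have [FE|Fn] := eqVneq F 0.
  have : prob p good = 1.
    rewrite -psum1 /prob; apply: eq_bigl => f.
    apply/forallP => j; apply: (le_trans (XleF f j)); by rewrite FE mul0r.
  move=> ->; lra.
have Fp : 0 < F by rewrite lt_def Fn.
set t := F / k.
have tp : 0 < t by rewrite divr_gt0.
set mu := S / h%:R.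
have mu0 : 0 <= mu by rewrite divr_ge0 ?sumr_ge0 // ltW.
have SF : S <= F by apply: sub_le.
have mut : mu <= t / 4.
  have e1 : mu * h%:R = S by rewrite /mu divfK // gt_eqF.
  have e2 : t * k = F by rewrite /t divfK // gt_eqF.
  nra.
set Y := fun f : {ffun U -> 'I_h} =>
  \sum_(j < h) (\sum_(i in A | f i == j) b i - mu) ^+ 2.
have Y0 : forall f, 0 <= Y f by move=> f; apply: sumr_ge0 => j _; apply: sqr_ge0.
have Ybad : forall f, ~~ good f -> 9 / 16 * t ^+ 2 <= Y f.
  move=> f /forallPn [j]; rewrite -ltNge => Xj.
  rewrite /Y (bigD1 j) //=.
  have r0 : 0 <= \sum_(i < h | i != j) (\sum_(i0 in A | f i0 == i) b i0 - mu) ^+ 2.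
    by apply: sumr_ge0 => i _; apply: sqr_ge0.
  move: Xj r0; rewrite -/t.
  set X := \sum_(i in A | f i == j) _.
  set r := \sum_(i < h | _) _.
  move=> Xj r0.
  have XX : \sum_(i in A | f i == j) b i = X by [].
  have d : 3/4 * t <= X - mu by lra.
  have d2 : (3/4 * t) ^+ 2 <= (X - mu) ^+ 2.
    have ht : 0 <= 3/4 * t by lra.
    by rewrite !expr2; apply: ler_pM.
  move: d2; rewrite !expr2 => d2; lra.
have markov : prob p (fun f => ~~ good f) * (9 / 16 * t ^+ 2) <= \sum_f p f * Y f.
  rewrite /prob mulr_suml.
  apply: (le_trans (y := \sum_(f | ~~ good f) p f * Y f)).
    by apply: ler_sum => f bf; apply: ler_wpM2l => //; apply: Ybad.
  by apply: sub_le => // f; apply: mulr_ge0.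
have EY : \sum_f p f * Y f =
   \sum_f p f * (\sum_(i in A) \sum_(i' in A) b i * b i' * (f i' == f i)%:R)
   - S ^+ 2 / h%:R.
  rewrite /Y; under eq_bigr do rewrite Y_eq //.
  under eq_bigr do rewrite mulrBr.
  by rewrite sumrB -mulr_suml psum1 mul1r.
rewrite EZ in EY.
have EZl := @EZ_le R U h p A b h0 ph b0.
set M := F * delta / (2 * k ^+ 2).
have M0 : 0 <= M by rewrite /M divr_ge0 ?mulr_ge0 ?ltW // mulr_gt0 // exprn_gt0.
have sq : \sum_(i in A) b i ^+ 2 <= M * S.
  rewrite /S mulr_sumr; apply: ler_sum => i iA.
  by rewrite expr2 ler_wpM2r //; apply: Ha.
have MF : M * F = delta / 2 * t ^+ 2.
  rewrite /M /t; field; rewrite gt_eqF //.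
have MS : M * S <= M * F by apply: ler_wpM2l.
have t2 : 0 < t ^+ 2 by rewrite exprn_gt0.
have key : prob p (fun f => ~~ good f) * (9 / 16 * t ^+ 2) <= delta / 2 * t ^+ 2.
  apply: (le_trans markov); rewrite EY -MF.
  apply: (le_trans (y := \sum_(i in A) b i ^+ 2)); last exact: le_trans sq MS.
  by rewrite lerBlDr.
move: key; rewrite mulrA ler_pM2r // => key.
lra.
Qed.
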